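(* Let $A\in\mathbb{R}^{n\times n}$ and consider $x_{k+1}=Ax_k$ on $\mathbb{R}^n$. Let $\xi\in\mathbb{R}^n$ and suppose that for every bounded set $P\subseteq\mathbb{R}^n$ there exists a positive integer $k$ with $A^k\xi\notin P$. Then $\lim_{k\to\infty}\|A^k\xi\|_2=\infty$; that is, for every bounded set $P\subseteq\mathbb{R}^n$ there exists $K\in\mathbb{Z}^+$ such that $A^k\xi\notin P$ for all $k\ge K$. *)

(* Defs.v *)
From HB Require Import structures.
From mathcomp Require Import all_boot all_order all_algebra.
From mathcomp Require Import reals.
Set Implicit Arguments. Unset Strict Implicit. Unset Printing Implicit Defensive.
Import Order.TTheory GRing.Theory Num.Theory.
Local Open Scope ring_scope.

Definition eucl_norm (R : realType) (n : nat) (x : 'cV[R]_n) : R :=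
  Num.sqrt (\sum_(i < n) x i 0 ^+ 2).

Definition bounded_set (R : realType) (n : nat) (P : 'cV[R]_n -> Prop) : Prop :=
  exists M : R, forall x, P x -> eucl_norm x <= M.

Definition traj (R : realType) (n : nat) (A : 'M[R]_n) (xi : 'cV[R]_n) (k : nat)
  : 'cV[R]_n := A ^+ k *m xi.

(* Main.v *)
Require Import Defs.
From mathcomp Require Import all_boot all_order all_algebra all_field.
From mathcomp Require Import reals complex lra ring zify.
From Stdlib Require Import Classical.
Set Implicit Arguments. Unset Strict Implicit. Unset Printing Implicit Defensive.
Import Order.TTheory GRing.Theory Num.Theory.
Local Open Scope ring_scope.

Definition nc (R : rcfType) (z : R[i]) : R := Normc.normc z.

Lemma nc_ge0 (R : rcfType) (z : R[i]) : 0 <= nc z.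
Proof. by case: z => a b; rewrite /nc /Normc.normc sqrtr_ge0. Qed.

Lemma ncD (R : rcfType) (x y : R[i]) : nc (x + y) <= nc x + nc y.
Proof. exact: le_normcD. Qed.

Lemma ncN (R : rcfType) (x : R[i]) : nc (- x) = nc x.
Proof. exact: normcN. Qed.

Lemma ncM (R : rcfType) (x y : R[i]) : nc (x * y) = nc x * nc y.
Proof. exact: Normc.normcM. Qed.

Lemma nc1 (R : rcfType) : nc (1 : R[i]) = 1.
Proof. exact: Normc.normc1. Qed.

Lemma nc0 (R : rcfType) : nc (0 : R[i]) = 0.
Proof. exact: Normc.normc0. Qed.

Lemma nc_eq0 (R : rcfType) (x : R[i]) : nc x = 0 -> x = 0.
Proof. exact: Normc.eq0_normc. Qed.

Lemma ncX (R : rcfType) (x : R[i]) k : nc (x ^+ k) = nc x ^+ k.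
Proof. by elim: k => [|k IH]; rewrite ?expr0 ?nc1 // !exprS ncM IH. Qed.

Lemma ncn (R : rcfType) k : nc (k%:R : R[i]) = k%:R.
Proof. by rewrite /nc normcMn Normc.normc1. Qed.

Lemma ncR (R : rcfType) (r : R) : nc (r%:C)%C = `|r|.
Proof. by rewrite /nc /Normc.normc /= expr0n /= addr0 sqrtr_sqr. Qed.

Lemma nc_sum (R : rcfType) (I : finType) (F : I -> R[i]) :
  nc (\sum_i F i) <= \sum_i nc (F i).
Proof.
apply: (big_rec2 (fun a b => nc a <= b)); first by rewrite nc0.
by move=> i a b _ H; apply: le_trans (ncD _ _) _; rewrite lerD2l.
Qed.

Definition vn (R : rcfType) p (x : 'cV[R[i]]_p) : R := \sum_i nc (x i 0).
Definition mn (R : rcfType) p q (P : 'M[R[i]]_(p,q)) : R := \sum_i \sum_j nc (P i j).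

Lemma vn_ge0 (R : rcfType) p (x : 'cV[R[i]]_p) : 0 <= vn x.
Proof. by apply: sumr_ge0 => i _; apply: nc_ge0. Qed.

Lemma mn_ge0 (R : rcfType) p q (x : 'M[R[i]]_(p,q)) : 0 <= mn x.
Proof. by apply: sumr_ge0 => i _; apply: sumr_ge0 => j _; apply: nc_ge0. Qed.

Lemma vnD (R : rcfType) p (x y : 'cV[R[i]]_p) : vn (x + y) <= vn x + vn y.
Proof. rewrite /vn -big_split /=; apply: ler_sum => i _; rewrite mxE; exact: ncD. Qed.

Lemma vnN (R : rcfType) p (x : 'cV[R[i]]_p) : vn (- x) = vn x.
Proof. by apply: eq_bigr => i _; rewrite mxE ncN. Qed.

Lemma vnZ (R : rcfType) p (c : R[i]) (x : 'cV[R[i]]_p) : vn (c *: x) = nc c * vn x.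
Proof. by rewrite /vn mulr_sumr; apply: eq_bigr => i _; rewrite mxE ncM. Qed.

Lemma vn0 (R : rcfType) p : vn (0 : 'cV[R[i]]_p) = 0.
Proof. by rewrite /vn big1 // => i _; rewrite mxE nc0. Qed.

Lemma vn_eq0 (R : rcfType) p (x : 'cV[R[i]]_p) : vn x = 0 -> x = 0.
Proof.
move=> H; apply/matrixP => i j; rewrite (ord1 j) mxE; apply: nc_eq0.
by apply: (psumr_eq0P _ H) => // k _; apply: nc_ge0.
Qed.

Lemma nc_le_vn (R : rcfType) p (x : 'cV[R[i]]_p) i : nc (x i 0) <= vn x.
Proof.
rewrite /vn (bigD1 i) //= lerDl; apply: sumr_ge0 => k _; exact: nc_ge0.
Qed.

Lemma vnM (R : rcfType) p q (P : 'M[R[i]]_(p,q)) (x : 'cV[R[i]]_q) :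
  vn (P *m x) <= mn P * vn x.
Proof.
rewrite /vn /mn mulr_suml; apply: ler_sum => i _; rewrite mxE mulr_suml.
apply: le_trans (nc_sum _) _; apply: ler_sum => j _; rewrite ncM.
by apply: ler_wpM2l; [exact: nc_ge0 | exact: nc_le_vn].
Qed.

Definition FB (R : rcfType) p (B : 'M[R[i]]_p.+1) (u : 'cV[R[i]]_p.+1) :=
  exists M : R, forall K, exists2 k, (K <= k)%N & vn (B ^+ k *m u) <= M.
Definition Bnd (R : rcfType) p (B : 'M[R[i]]_p.+1) (u : 'cV[R[i]]_p.+1) :=
  exists M : R, forall k, vn (B ^+ k *m u) <= M.

Lemma arch_le0 (R : realType) (c M : R) :
  (forall K, exists2 k, (K <= k)%N & k%:R * c <= M) -> c <= 0.
Proof.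
move=> H; case: (lerP c 0) => // cpos; exfalso.
have h0 : 0 <= `|M| / c by rewrite divr_ge0 // ltW.
have := archi_boundP h0; set K := Num.Def.archi_bound _ => HK.
have [k Kk Hk] := H K.
have : K%:R <= k%:R :> R by rewrite ler_nat.
move=> HKk.
have : `|M| / c < k%:R by apply: lt_le_trans HKk.
rewrite ltr_pdivrMr // => H2.
have := ler_norm M; lra.
Qed.

Lemma bernoulli (R : realType) (r : R) k : 1 <= r -> 1 + k%:R * (r - 1) <= r ^+ k.
Proof.
move=> r1; elim: k => [|k IH]; first by rewrite expr0 mul0r addr0.
rewrite exprS -natr1.
have k0 : 0 <= k%:R :> R by rewrite ler0n.
have : r * (1 + k%:R * (r - 1)) <= r * r ^+ k by rewrite ler_wpM2l //; lra.
have : 0 <= k%:R * ((r - 1) * (r - 1)) by rewrite mulr_ge0 // mulr_ge0 //; lra.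
nra.
Qed.

Lemma FB_mul (R : rcfType) p (B P : 'M[R[i]]_p.+1) u :
  GRing.comm B P -> FB B u -> FB B (P *m u).
Proof.
move=> cBP [M HM]; exists (mn P * M) => K.
have [k Kk Hk] := HM K; exists k => //.
have e : B ^+ k *m (P *m u) = P *m (B ^+ k *m u).
  rewrite !mulmxA !mulmxE; congr (_ *m _).
  by have := commrX k (commr_sym cBP); rewrite /GRing.comm => ->.
rewrite e; apply: le_trans (vnM _ _) _; apply: ler_wpM2l => //; exact: mn_ge0.
Qed.

Lemma Bnd0 (R : rcfType) p (B : 'M[R[i]]_p.+1) : Bnd B 0.
Proof. by exists 0 => k; rewrite mulmx0 vn0. Qed.

Lemma BndD (R : rcfType) p (B : 'M[R[i]]_p.+1) u v : Bnd B u -> Bnd B v -> Bnd B (u + v).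
Proof.
move=> [M1 H1] [M2 H2]; exists (M1 + M2) => k; rewrite mulmxDr.
by apply: le_trans (vnD _ _) _; apply: lerD.
Qed.

Lemma commNB (R : rcfType) p (B : 'M[R[i]]_p.+1) l : GRing.comm B (B - l%:M).
Proof. by rewrite /GRing.comm mulrBr mulrBl -!mulmxE scalar_mxC. Qed.

Lemma BNv (R : rcfType) p (B : 'M[R[i]]_p.+1) l (v : 'cV[R[i]]_p.+1) :
  B *m v = (B - l%:M) *m v + l *: v.
Proof. by rewrite mulmxBl mul_scalar_mx subrK. Qed.

Lemma Npow (R : rcfType) p (N : 'M[R[i]]_p.+1) m (u : 'cV[R[i]]_p.+1) :
  N ^+ m *m (N *m u) = N ^+ m.+1 *m u.
Proof. by rewrite mulmxA mulmxE -exprSr. Qed.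

Lemma Npow' (R : rcfType) p (N : 'M[R[i]]_p.+1) m (u : 'cV[R[i]]_p.+1) :
  N *m (N ^+ m *m u) = N ^+ m.+1 *m u.
Proof. by rewrite mulmxA mulmxE -exprS. Qed.

Lemma Bpow (R : rcfType) p (B : 'M[R[i]]_p.+1) k (u : 'cV[R[i]]_p.+1) :
  B ^+ k.+1 *m u = B ^+ k *m (B *m u).
Proof. by rewrite mulmxA mulmxE -exprSr. Qed.

Lemma eigpow (R : rcfType) p (B : 'M[R[i]]_p.+1) l (v : 'cV[R[i]]_p.+1) k :
  (B - l%:M) *m v = 0 -> B ^+ k *m v = l ^+ k *: v.
Proof.
move=> Hv; elim: k => [|k IH]; first by rewrite !expr0 mul1mx scale1r.
by rewrite Bpow (BNv B l v) Hv add0r -scalemxAr IH scalerA -exprS.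
Qed.

Lemma L1 (R : realType) p (B : 'M[R[i]]_p.+1) l : nc l < 1 ->
  forall m (u : 'cV[R[i]]_p.+1), (B - l%:M) ^+ m *m u = 0 -> Bnd B u.
Proof.
move=> r1; elim=> [|m IH] u.
  by rewrite expr0 mul1mx => ->; exact: Bnd0.
rewrite -Npow => /IH [Mv HMv].
set r := nc l.
have r0 : 0 <= r by exact: nc_ge0.
exists (Num.max (vn u) (Mv / (1 - r))) => k.
set T := Num.max _ _.
have hT1 : vn u <= T by rewrite le_max lexx.
have hT2 : Mv / (1 - r) <= T by rewrite le_max lexx orbT.
have hT3 : Mv <= T * (1 - r) by rewrite -ler_pdivrMr // subr_gt0.
elim: k => [|k IHk]; first by rewrite expr0 mul1mx.
rewrite Bpow (BNv B l u) mulmxDr -scalemxAr.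
apply: le_trans (vnD _ _) _; rewrite vnZ.
have := HMv k; rewrite -/r => h1.
have : r * vn (B ^+ k *m u) <= r * T by rewrite ler_wpM2l.
nra.
Qed.

Lemma L2 (R : realType) p (B : 'M[R[i]]_p.+1) l : 1 < nc l ->
  forall m (u : 'cV[R[i]]_p.+1), (B - l%:M) ^+ m *m u = 0 -> FB B u -> u = 0.
Proof.
move=> r1; elim=> [|m IH] u.
  by rewrite expr0 mul1mx => ->.
move=> Hu Fu; apply: IH => //.
set v := _ ^+ m *m u.
have Nv : (B - l%:M) *m v = 0 by rewrite Npow'.
have [M HM] : FB B v.
  apply: FB_mul => //; apply: commrX; exact: commNB.
have : (nc l - 1) * vn v <= 0.
  apply: (@arch_le0 _ _ M) => K; have [k Kk Hk] := HM K; exists k => //.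
  rewrite (eigpow _ Nv) vnZ ncX in Hk.
  apply: le_trans Hk; rewrite mulrA ler_wpM2r ?vn_ge0 //.
  have := bernoulli k (ltW r1); lra.
have := vn_ge0 v.
move=> h0 h1; apply: vn_eq0; apply/eqP; rewrite eq_le h0 andbT.
by rewrite -(pmulr_rle0 _ (x:=nc l - 1)) ?subr_gt0.
Qed.

Lemma Bpow' (R : rcfType) p (B : 'M[R[i]]_p.+1) k (u : 'cV[R[i]]_p.+1) :
  B ^+ k.+1 *m u = B *m (B ^+ k *m u).
Proof. by rewrite mulmxA mulmxE -exprS. Qed.

Lemma NBk (R : rcfType) p (B : 'M[R[i]]_p.+1) l k (u : 'cV[R[i]]_p.+1) :
  (B - l%:M) *m (B ^+ k *m u) = B ^+ k *m ((B - l%:M) *m u).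
Proof. by rewrite !mulmxA !mulmxE (commrX k (commr_sym (commNB B l))). Qed.

Lemma L3 (R : realType) p (B : 'M[R[i]]_p.+1) l : nc l = 1 ->
  forall m (u : 'cV[R[i]]_p.+1), (B - l%:M) ^+ m *m u = 0 -> FB B u ->
  (B - l%:M) *m u = 0.
Proof.
move=> r1; elim=> [|m IH] u.
  by rewrite expr0 mul1mx => ->; rewrite mulmx0.
case: m IH => [|m] IH; first by rewrite expr1.
move=> Hu Fu; apply: IH => //.
set N := B - l%:M.
set v := N ^+ m *m u.
set w := N *m v.
have ew : w = N ^+ m.+1 *m u by rewrite /w Npow'.
have Nw : N *m w = 0 by rewrite ew Npow'.
have Bw : forall k, B ^+ k *m w = l ^+ k *: w by move=> k; apply: eigpow.
have claim : forall k, l *: (B ^+ k *m v) = l ^+ k *: (l *: v + k%:R *: w).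
  elim=> [|k IHk]; first by rewrite expr0 mul1mx scale1r scale0r addr0.
  rewrite Bpow' (BNv B l) NBk -/N -/w Bw.
  rewrite scalerDr IHk -natr1 !scalerDr !scalerDl !scalerA.
  rewrite -exprS scale1r scalerDr scalerA addrCA; congr (_ + _); exact: addrC.
have [M HM] : FB B v.
  apply: FB_mul => //; apply: commrX; exact: commNB.
have : vn w <= 0.
  apply: (@arch_le0 _ _ (M + vn v)) => K; have [k Kk Hk] := HM K; exists k => //.
  have e1 : vn (B ^+ k *m v) = vn (l *: v + k%:R *: w).
    by rewrite -[LHS]mul1r -r1 -vnZ claim vnZ ncX r1 expr1n mul1r.
  have e2 : k%:R *: w = (l *: v + k%:R *: w) - l *: v by rewrite addrC addKr.
  have : vn (k%:R *: w) <= vn (l *: v + k%:R *: w) + vn v.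
    by rewrite {1}e2; apply: le_trans (vnD _ _) _; rewrite vnN vnZ r1 mul1r.
  rewrite vnZ ncn -e1 => h; lra.
move=> h; have := vn_ge0 w => h'.
by rewrite -ew; apply: vn_eq0; apply/eqP; rewrite eq_le h h'.
Qed.

Lemma single (R : realType) p (B : 'M[R[i]]_p.+1) l m (u : 'cV[R[i]]_p.+1) :
  (B - l%:M) ^+ m *m u = 0 -> FB B u -> Bnd B u.
Proof.
move=> Hu Fu; case: (ltrgtP (nc l) 1) => hl.
- exact: L1 hl m u Hu.
- by rewrite (L2 hl Hu Fu); exact: Bnd0.
- have Nu := L3 hl Hu Fu; exists (vn u) => k.
  by rewrite (eigpow _ Nu) vnZ ncX hl expr1n mul1r.
Qed.

Lemma Hcomm (R : rcfType) p (B : 'M[R[i]]_p.+1) (P : {poly R[i]}) :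
  GRing.comm B (horner_mx B P).
Proof.
by rewrite /GRing.comm -{1 4}(horner_mx_X B) -!rmorphM mulrC.
Qed.

Lemma HM (R : rcfType) p (B : 'M[R[i]]_p.+1) (P Q : {poly R[i]}) (u : 'cV[R[i]]_p.+1) :
  horner_mx B P *m (horner_mx B Q *m u) = horner_mx B (P * Q) *m u.
Proof. by rewrite mulmxA mulmxE rmorphM. Qed.

Lemma HX (R : rcfType) p (B : 'M[R[i]]_p.+1) l m :
  horner_mx B (('X - l%:P) ^+ m) = (B - l%:M) ^+ m.
Proof. by rewrite rmorphXn rmorphB /= horner_mx_X horner_mx_C. Qed.

Lemma key (R : realType) p (B : 'M[R[i]]_p.+1) (q : {poly R[i]}) :
  q != 0 -> forall u, horner_mx B q *m u = 0 -> FB B u -> Bnd B u.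
Proof.
move=> + u; have [s] := ubnP (size q); elim: s q u => // s IH q u Hs qn0 Hq Fu.
case: (eqVneq (size q) 1) => [/eqP/size_poly1P [c c0 eqc]| s1].
  move: Hq; rewrite eqc horner_mx_C mul_scalar_mx => /eqP.
  by rewrite scaler_eq0 (negbTE c0) /= => /eqP ->; exact: Bnd0.
have [l rl] := closed_rootP _ s1.
have [m [q' /implyP /(_ qn0) nr eq]] := multiplicity_XsubC q l.
have q'0 : q' != 0 by apply: contraNneq qn0; rewrite eq => ->; rewrite mul0r.
case: m eq => [|m] eq.
  by move: rl; rewrite eq expr0 mulr1 (negbTE nr).
have cop : coprimep q' (('X - l%:P) ^+ m.+1) by apply: coprimep_expr; rewrite coprimep_XsubC.
have [[a b] /= hab] := Bezout_eq1_coprimepP _ _ cop.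
have -> : u = horner_mx B (a * q') *m u + horner_mx B (b * ('X - l%:P) ^+ m.+1) *m u.
  by rewrite -mulmxDl -rmorphD hab rmorph1 mul1mx.
apply: BndD.
  apply: (@single _ _ B l m.+1).
    have e1 : ('X - l%:P) ^+ m.+1 * (a * q') = a * q by rewrite eq mulrCA [q' * _]mulrC.
    by rewrite -HX HM e1 -HM Hq mulmx0.
  by apply: FB_mul => //; exact: Hcomm.
apply: (IH q') => //.
- move: Hs; rewrite eq size_Mmonic // ?monic_exp ?monicXsubC //.
  by rewrite size_exp_XsubC addnS /=; lia.
- have e2 : q' * (b * ('X - l%:P) ^+ m.+1) = b * q by rewrite eq mulrCA.
  by rewrite HM e2 -HM Hq mulmx0.
- by apply: FB_mul => //; exact: Hcomm.
Qed.


Lemma eucl_le_sum (R : realType) p (x : 'cV[R]_p) : eucl_norm x <= \sum_i `|x i 0|.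
Proof.
set S := \sum_i _.
have S0 : 0 <= S by apply: sumr_ge0 => i _.
have le : forall i, `|x i 0| <= S.
  by move=> i; rewrite /S (bigD1 i) //= lerDl; apply: sumr_ge0.
rewrite -(ger0_norm S0) -sqrtr_sqr /eucl_norm ler_sqrt ?sqr_ge0 //.
rewrite expr2 {2}/S mulr_sumr; apply: ler_sum => i _.
rewrite -[x i 0 ^+ 2]ger0_norm ?sqr_ge0 // normrX expr2 mulrC.
by apply: ler_wpM2r => //; rewrite ger0_norm.
Qed.

Lemma abs_le_eucl (R : realType) p (x : 'cV[R]_p) i : `|x i 0| <= eucl_norm x.
Proof.
rewrite -sqrtr_sqr /eucl_norm ler_sqrt; last by apply: sumr_ge0 => j _; exact: sqr_ge0.
by rewrite (bigD1 i) //= lerDl; apply: sumr_ge0 => j _; exact: sqr_ge0.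
Qed.

Lemma sum_le_eucl (R : realType) p (x : 'cV[R]_p) :
  \sum_i `|x i 0| <= p%:R * eucl_norm x.
Proof.
apply: le_trans (_ : \sum_(i < p) eucl_norm x <= _).
  by apply: ler_sum => i _; exact: abs_le_eucl.
by rewrite sumr_const card_ord mulr_natl.
Qed.

Lemma map_pow (R : realType) p (A : 'M[R]_p.+1) k :
  map_mx (real_complex R) (A ^+ k) = (map_mx (real_complex R) A) ^+ k.
Proof.
elim: k => [|k IH]; first by rewrite !expr0 map_mx1.
by rewrite !exprS -!mulmxE map_mxM IH.
Qed.

Lemma vn_map (R : realType) p (x : 'cV[R]_p) :
  vn (map_mx (real_complex R) x) = \sum_i `|x i 0|.
Proof. by apply: eq_bigr => i _; rewrite mxE ncR. Qed.

Theorem lemma5 (R : realType) (n : nat) (A : 'M[R]_n) (xi : 'cV[R]_n) :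
  (forall P : 'cV[R]_n -> Prop, bounded_set P ->
     exists k : nat, (0 < k)%N /\ ~ P (traj A xi k)) ->
  forall P : 'cV[R]_n -> Prop, bounded_set P ->
    exists K : nat, (0 < K)%N /\ forall k : nat, (K <= k)%N -> ~ P (traj A xi k).
Proof.
move=> Hunb P [M HP].
case: n A xi Hunb P HP => [|n] A xi Hunb P HP.
  have B0 : bounded_set (fun _ : 'cV[R]_0 => True).
    by exists 0 => x _; rewrite /eucl_norm big_ord0 sqrtr0.
  have [k [_ Hk]] := Hunb _ B0.
  by exfalso; apply: Hk.
set f := real_complex R.
set Bc := map_mx f A; set uc := map_mx f xi.
have tm : forall k, map_mx f (traj A xi k) = Bc ^+ k *m uc.
  by move=> k; rewrite /traj map_mxM map_pow.
set Mc := n.+1%:R * M.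
case: (classic (exists K, forall k, (K <= k)%N -> Mc < vn (Bc ^+ k *m uc))) => [[K HK]|NH].
  exists K.+1; split => // k Kk Pk.
  have := HK k (ltnW Kk); rewrite -tm vn_map => h1.
  have h2 := sum_le_eucl (traj A xi k).
  have h3 : n.+1%:R * eucl_norm (traj A xi k) <= Mc by rewrite ler_wpM2l ?ler0n ?HP.
  have : Mc < Mc by apply: lt_le_trans h1 (le_trans h2 h3).
  by rewrite ltxx.
have Fu : FB Bc uc.
  exists Mc => K.
  have [k Hk'] := not_all_ex_not _ _ (not_ex_all_not _ _ NH K).
  have [Kk Hk] := imply_to_and _ _ Hk'.
  by exists k => //; rewrite leNgt; apply/negP.
have [Mb HMb] := key (monic_neq0 (char_poly_monic Bc)) (etrans (congr1 (mulmx^~ uc) (Cayley_Hamilton Bc)) (mul0mx _ _)) Fu.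
have [k [_ Hk]] := Hunb (fun x => eucl_norm x <= Mb) (ex_intro _ Mb (fun x h => h)).
exfalso; apply: Hk; apply: le_trans (eucl_le_sum _) _.
by rewrite -vn_map tm.
Qed.
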